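(* Let $M\in\mathbb{C}^{3\times 3}$ be nonsingular and let $s\in\mathbb{C}^3$ be a nonzero vector such that for every integer $k\ge 1$, $s$ is not a column eigenvector of $M^k$. Let $F_1,F_2,F_3\in\mathbb{C}^{2\times 3}$ with $\mathrm{rank}(F_i)=2$ for $1\le i\le 3$, such that the intersection of the row spaces of $F_1,F_2,F_3$ is $\{0\}$. Then for every positive integer $n$ there exist some $F\in\{F_1,F_2,F_3\}$ and some subset $S\subseteq\{FM^ks: 0\le k\le n^3\}$ with $|S|\ge n$ such that the vectors in $S$ are pairwise linearly independent. *)

(* Defs.v *)
From HB Require Import structures.
From mathcomp Require Import all_boot all_order all_algebra.
From mathcomp Require Import complex.
From mathcomp Require Import reals.
Set Implicit Arguments. Unset Strict Implicit. Unset Printing Implicit Defensive.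
Import Order.TTheory GRing.Theory Num.Theory.
Local Open Scope ring_scope.

(* The complex numbers are modelled as R[i] = complex R for R : realType
   (a complete archimedean ordered field, i.e. the reals). *)

Definition col_eigenvector (C : fieldType) (m : nat) (A : 'M[C]_m) (s : 'cV[C]_m) :=
  s != 0 /\ exists lam : C, A *m s = lam *: s.

Definition lin_indep2 (C : fieldType) (m : nat) (u v : 'cV[C]_m) :=
  \rank (row_mx u v) = 2%N.

(* Main.v *)
Require Import Defs.
From HB Require Import structures.
From mathcomp Require Import all_boot all_order all_algebra.
From mathcomp Require Import zify.
Import Order.TTheory GRing.Theory Num.Theory.
Local Open Scope ring_scope.

Module Aux.
Set Implicit Arguments. Unset Strict Implicit. Unset Printing Implicit Defensive.


Lemma rk2 (C : fieldType) m (u v : 'cV[C]_m) : \rank (row_mx u v) = \rank (u^T + v^T)%MS.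
Proof. by rewrite -mxrank_tr tr_row_mx addsmxE. Qed.

Lemma li_sym (C : fieldType) m (u v : 'cV[C]_m) : lin_indep2 u v -> lin_indep2 v u.
Proof. by rewrite /lin_indep2 !rk2 addsmxC. Qed.

Lemma rk_self (C : fieldType) m (u : 'cV[C]_m) : (\rank (u^T + u^T)%MS <= 1)%N.
Proof.
apply: leq_trans (rank_leq_row u^T).
by apply: mxrankS; rewrite addsmx_sub submx_refl.
Qed.

Lemma li_self (C : fieldType) m (u : 'cV[C]_m) : ~ lin_indep2 u u.
Proof. by rewrite /lin_indep2 rk2 => h; have := rk_self u; rewrite h. Qed.

Lemma li_neq (C : fieldType) m (u v : 'cV[C]_m) : lin_indep2 u v -> u != v.
Proof. by move=> h; apply/eqP => e; move: h; rewrite e; apply: li_self. Qed.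

Lemma rk_le1_sub (C : fieldType) m (u v : 'cV[C]_m) : u != 0 -> (\rank (u^T + v^T)%MS <= 1)%N ->
  (v^T <= u^T)%MS.
Proof.
move=> nz h.
have r1 : \rank u^T = 1%N.
  apply/eqP; rewrite eqn_leq rank_leq_row lt0n mxrank_eq0 trmx_eq0 //.
have [h1 h2] := mxrank_leqif_sup (addsmxSl u^T v^T).
have : (u^T + v^T <= u^T)%MS by rewrite -h2 eqn_leq h1 r1 h.
exact: (submx_trans (addsmxSr u^T v^T)).
Qed.

Lemma li_trans (C : fieldType) (p t q : 'cV[C]_2) : t != 0 -> ~ lin_indep2 p t -> ~ lin_indep2 t q ->
  ~ lin_indep2 p q.
Proof.
rewrite /lin_indep2 !rk2 => tnz h1 h2.
have le2 (a b : 'cV[C]_2) : (\rank (a^T + b^T)%MS <= 2)%N.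
  by apply: leq_trans (mxrank_adds_leqif _ _).1 _; rewrite (leq_add (rank_leq_row _) (rank_leq_row _)).
have l1 : (\rank (t^T + p^T)%MS <= 1)%N.
  by rewrite addsmxC -ltnS ltn_neqAle le2 andbT; apply/eqP.
have l2 : (\rank (t^T + q^T)%MS <= 1)%N.
  by rewrite -ltnS ltn_neqAle le2 andbT; apply/eqP.
have s1 := rk_le1_sub tnz l1; have s2 := rk_le1_sub tnz l2.
have : (\rank (p^T + q^T)%MS <= 1)%N.
  apply: leq_trans (rank_leq_row t^T); apply: mxrankS; by rewrite addsmx_sub s1 s2.
by move=> h e; rewrite e in h.
Qed.

Lemma ker_sub (C : fieldType) (F : 'M[C]_(2,3)) (W : 'M[C]_(3,2)) :
  \rank F = 2%N -> \rank W = 2%N -> \rank (F *m W) != 2%N -> (kermx W <= F)%MS.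
Proof.
move=> rF rW rG.
have rG1 : (\rank (F *m W) <= 1)%N.
  by rewrite -ltnS ltn_neqAle rG rank_leq_row.
pose H := kermx (F *m W) *m F.
have rH : \rank H = \rank (kermx (F *m W)) by rewrite mxrankMfree // /row_free rF.
have rH1 : (1 <= \rank H)%N by rewrite rH mxrank_ker; lia.
have HW : (H <= kermx W)%MS by rewrite sub_kermx /H -mulmxA mulmx_ker.
have rK : \rank (kermx W) = 1%N by rewrite mxrank_ker rW.
have [h1 h2] := mxrank_leqif_sup HW.
have sKH : (kermx W <= H)%MS by rewrite -h2 eqn_leq h1 rK rH1.
exact: submx_trans sKH (submxMl _ _).
Qed.

Lemma key3 (C : fieldType) (F1 F2 F3 : 'M[C]_(2,3)) (W : 'M[C]_(3,2)) :
  \rank F1 = 2%N -> \rank F2 = 2%N -> \rank F3 = 2%N ->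
  (F1 :&: F2 :&: F3)%MS = 0 -> \rank W = 2%N ->
  [\/ \rank (F1 *m W) = 2%N, \rank (F2 *m W) = 2%N | \rank (F3 *m W) = 2%N].
Proof.
move=> r1 r2 r3 hc rW.
case: (eqVneq (\rank (F1 *m W)) 2%N) => [e|n1]; first by constructor 1.
case: (eqVneq (\rank (F2 *m W)) 2%N) => [e|n2]; first by constructor 2.
case: (eqVneq (\rank (F3 *m W)) 2%N) => [e|n3]; first by constructor 3.
have : (kermx W <= F1 :&: F2 :&: F3)%MS by rewrite !sub_capmx !ker_sub.
rewrite hc submx0 -mxrank_eq0 mxrank_ker rW.
by [].
Qed.

Lemma FW_nz (C : fieldType) (F : 'M[C]_(2,3)) (W : 'M[C]_(3,2)) :
  \rank F = 2%N -> \rank W = 2%N -> F *m W != 0.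
Proof.
move=> rF rW; apply/eqP => e.
have : (F <= kermx W)%MS by rewrite sub_kermx e.
move/mxrankS; rewrite mxrank_ker rW rF. by [].
Qed.

Lemma indep_pow (C : fieldType) (M : 'M[C]_3) (s : 'cV[C]_3) (j k : nat) :
  M \in unitmx -> s != 0 ->
  (forall k : nat, (1 <= k)%N -> ~ col_eigenvector (M ^+ k) s) ->
  (j < k)%N -> \rank (row_mx (M ^+ j *m s) (M ^+ k *m s)) = 2%N.
Proof.
move=> uM snz noe ljk.
have Uj : M ^+ j \in unitmx by apply: unitrX.
set u := M ^+ j *m s; set v := M ^+ k *m s.
have unz : u != 0.
  apply/eqP => e; move/eqP: snz; apply.
  by rewrite -(mulKmx Uj s) -/u e mulmx0.
rewrite rk2.
have le2 : (\rank (u^T + v^T)%MS <= 2)%N.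
  by apply: leq_trans (mxrank_adds_leqif _ _).1 _; rewrite (leq_add (rank_leq_row _) (rank_leq_row _)).
apply/eqP; rewrite eqn_leq le2 /=; rewrite ltnNge; apply/negP => l1.
have /submxP [D hD] := rk_le1_sub unz l1.
have hv : v = D 0 0 *: u.
  by rewrite -[v]trmxK hD trmx_mul trmxK [D]mx11_scalar tr_scalar_mx mul_mx_scalar mxE eqxx mulr1n.
apply: (noe (k - j)%N); first by rewrite subn_gt0.
split => //; exists (D 0 0).
have e1 : M ^+ j *m (M ^+ (k - j) *m s) = M ^+ j *m (D 0 0 *: s).
  rewrite -scalemxAr -/u -hv /v mulmxA mulmxE -exprD subnKC //; exact: ltnW.
by rewrite -(mulKmx Uj (M ^+ (k - j) *m s)) e1 mulKmx.
Qed.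

Lemma arith n a b c x y : (1 < n)%N -> (a < n)%N -> (b < n)%N -> (c < n)%N ->
  (x <= a * (b * c))%N -> (y <= 3)%N -> (x + y)%N = (n ^ 3).+1 -> False.
Proof.
move=> n1 ha hb hc hx hy e.
have : (a * (b * c) <= n.-1 * (n.-1 * n.-1))%N.
  by rewrite !leq_mul // -ltnS prednK // ltnW.
case: n n1 ha hb hc e => [|[|m]] //= _ _ _ _ e h.
nia.
Qed.

Lemma comb (C : fieldType) (n : nat) (g : 'I_3 -> 'I_(n ^ 3).+1 -> 'cV[C]_2) :
  (1 < n)%N ->
  (forall j k, j != k -> exists i, lin_indep2 (g i j) (g i k)) ->
  (forall i j k, g i j = 0 -> g i k = 0 -> j = k) ->
  exists i, exists R : {set 'I_(n ^ 3).+1},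
    (n <= #|R|)%N /\ {in R &, forall j k, j != k -> lin_indep2 (g i j) (g i k)}.
Proof.
move=> n1 hpair hzero.
set I := 'I_(n ^ 3).+1.
pose dep i (j k : I) := \rank (row_mx (g i j) (g i k)) != 2%N.
have depP i j k : reflect (~ lin_indep2 (g i j) (g i k)) (dep i j k).
  rewrite /dep /lin_indep2; apply: (iffP negP) => [h e|h /eqP e]; apply: h => //; by rewrite e.
pose V := [set k : I | [forall i, g i k != 0]].
pose R i := [set k in V | [forall j : I, ((j < k)%N && (j \in V)) ==> ~~ dep i j k]].
pose rep i k := [arg min_(j < k | (j \in V) && dep i j k) (j : nat)].
have depsym i j k : dep i j k -> dep i k j.
  move=> /depP h; apply/depP => h'; apply: h; exact: li_sym.
have deptr i j r k : r \in V -> dep i j r -> dep i r k -> dep i j k.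
  move=> rV /depP h1 /depP h2; apply/depP; apply: li_trans h1 h2.
  by move: rV; rewrite inE => /forallP.
have deprefl i k : dep i k k by apply/depP; apply: li_self.
have repP i k : k \in V -> [/\ rep i k \in V, dep i (rep i k) k &
     forall j, j \in V -> dep i j k -> (rep i k <= j)%N].
  move=> kV; rewrite /rep; case: arg_minnP; first by rewrite kV deprefl.
  move=> r /andP [rV dr] hmin; split => // j jV djk; apply: hmin; by rewrite jV.
have repR i k : k \in V -> rep i k \in R i.
  move=> kV; have [rV dr hmin] := repP i k kV.
  rewrite inE rV /=; apply/forallP => j; apply/implyP => /andP [ljr jV].
  apply/negP => djr.
  have := hmin j jV (deptr _ _ _ _ rV djr dr).
  by rewrite leqNgt ljr.
have RV i : R i \subset V by apply/subsetP => k; rewrite inE => /andP [].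
have Rpw i : {in R i &, forall j k, j != k -> lin_indep2 (g i j) (g i k)}.
  have h : forall j k, j \in R i -> k \in R i -> (j < k)%N -> lin_indep2 (g i j) (g i k).
    move=> j k jR kR ljk.
    have jV : j \in V by apply: (subsetP (RV i)).
    move: kR; rewrite inE => /andP [_ /forallP /(_ j)].
    by rewrite ljk jV /= => /negPn /eqP.
  move=> j k jR kR njk; case: (ltngtP j k) => [ljk|lkj|ejk].
  - exact: h.
  - by apply: li_sym; apply: h.
  - by move: njk; rewrite (val_inj ejk) eqxx.
pose i0 : 'I_3 := 0. pose i1 : 'I_3 := 1. pose i2 : 'I_3 := 2.
pose f k := (rep i0 k, (rep i1 k, rep i2 k)).
have finj : {in V &, injective f}.
  move=> k1 k2 k1V k2V [e0 e1 e2].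
  apply/eqP; apply/negPn/negP => nk.
  have [i hi] := hpair _ _ nk.
  have hd : forall i, rep i k1 = rep i k2 -> dep i k1 k2.
    move=> i' e; have [rV d1 _] := repP i' k1 k1V; have [_ d2 _] := repP i' k2 k2V.
    rewrite e in rV d1; exact: deptr _ _ _ _ rV (depsym _ _ _ d1) d2.
  have E : forall i : 'I_3, rep i k1 = rep i k2.
    move=> [[|[|[|//]]] p].
    - by rewrite (_ : Ordinal p = 0) //; apply: val_inj.
    - by rewrite (_ : Ordinal p = 1) //; apply: val_inj.
    - by rewrite (_ : Ordinal p = 2) //; apply: val_inj.
  by move/depP: (hd i (E i)).
have cardV : (#|V| <= #|R i0| * (#|R i1| * #|R i2|))%N.
  rewrite -(card_in_imset finj) -!cardsX; apply: subset_leq_card.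
  apply/subsetP => x /imsetP [k kV ->]; by rewrite !in_setX /= !repR.
have cardZ i : (#|[set k : I | g i k == 0%R]| <= 1)%N.
  apply/card_le1_eqP => j k; rewrite !inE => /eqP hj /eqP hk; exact: (hzero i k j hk hj).
have cardnV : (#|~: V| <= 3)%N.
  have sub : ~: V \subset [set k : I | g i0 k == 0%R] :|: [set k : I | g i1 k == 0%R] :|: [set k : I | g i2 k == 0%R].
    apply/subsetP => k; rewrite !inE negb_forall => /existsP [i]; rewrite negbK => hi.
    case: i hi => [[|[|[|//]]] ?] hi.
    - by rewrite (_ : Ordinal _ = 0) // in hi *; [rewrite hi | apply: val_inj].
    - by rewrite (_ : Ordinal _ = 1) // in hi *; [rewrite hi orbT | apply: val_inj].
    - by rewrite (_ : Ordinal _ = 2) // in hi *; [rewrite hi !orbT | apply: val_inj].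
  apply: leq_trans (subset_leq_card sub) _.
  apply: leq_trans (leq_card_setU _ _).1 _.
  apply: leq_trans (leq_add (leq_card_setU _ _).1 (leqnn _)) _.
  by rewrite -[3%N]/(1 + 1 + 1)%N !leq_add.
have cV : (#|V| + #|~: V|)%N = (n ^ 3).+1 by rewrite cardsC card_ord.
have [ii h0] : exists i, (n <= #|R i|)%N.
  case: (leqP n #|R i0|) => [h|h0]; first by exists i0.
  case: (leqP n #|R i1|) => [h|h1]; first by exists i1.
  case: (leqP n #|R i2|) => [h|h2]; first by exists i2.
  exfalso; exact: (arith n1 h0 h1 h2 cardV cardnV cV).
by exists ii, (R ii); split => //; apply: Rpw.
Qed.
End Aux.
Import Aux.
From mathcomp Require Import complex.
From mathcomp Require Import reals.

Theorem lemma3p1 (R : realType) (M : 'M[R[i]]_3) (s : 'cV[R[i]]_3)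
  (F1 F2 F3 : 'M[R[i]]_(2, 3)) :
  M \in unitmx ->
  s != 0 ->
  (forall k : nat, (1 <= k)%N -> ~ col_eigenvector (M ^+ k) s) ->
  \rank F1 = 2%N -> \rank F2 = 2%N -> \rank F3 = 2%N ->
  (F1 :&: F2 :&: F3)%MS = 0 ->
  forall n : nat, (0 < n)%N ->
  exists F : 'M[R[i]]_(2, 3), (F = F1 \/ F = F2 \/ F = F3) /\
  exists S : seq 'cV[R[i]]_2,
    [/\ uniq S, (n <= size S)%N,
        (forall v, v \in S -> exists2 k : nat, (k <= n ^ 3)%N & v = F *m (M ^+ k *m s)) &
        (forall u v, u \in S -> v \in S -> u != v -> lin_indep2 u v)].
Proof.
move=> uM snz noe r1 r2 r3 hc n n0.
case: (ltngtP n 1) => [|n1|en]; first by rewrite ltnS leqn0 => /eqP e; rewrite e in n0.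
2: { exists F1; split; first by left.
     exists [:: F1 *m s]; split => //; first by rewrite en.
     - move=> v; rewrite inE => /eqP ->; exists 0%N => //; by rewrite expr0 mul1mx.
     - by move=> u v; rewrite !inE => /eqP -> /eqP ->; rewrite eqxx. }
pose Fs (i : 'I_3) := if i == 0 then F1 else if i == 1 then F2 else F3.
have rFs i : \rank (Fs i) = 2%N by rewrite /Fs; case: ifP => _; [|case: ifP => _].
have FsE i : Fs i = F1 \/ Fs i = F2 \/ Fs i = F3.
  by rewrite /Fs; case: ifP => _; [left|case: ifP => _; right; [left|right]].
pose g i (k : 'I_(n ^ 3).+1) := Fs i *m (M ^+ k *m s).
have rW (j k : nat) : (j < k)%N -> \rank (row_mx (M ^+ j *m s) (M ^+ k *m s)) = 2%N.
  by move=> ljk; apply: indep_pow.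
have pairlt (j k : 'I_(n ^ 3).+1) : (j < k)%N -> exists i, lin_indep2 (g i j) (g i k).
  move=> ljk; have := key3 r1 r2 r3 hc (rW _ _ ljk).
  move=> -[h|h|h]; [exists 0|exists 1|exists 2]; rewrite /lin_indep2 /g /Fs /= -mul_mx_row; exact: h.
have hpair (j k : 'I_(n ^ 3).+1) : j != k -> exists i, lin_indep2 (g i j) (g i k).
  move=> njk; case: (ltngtP j k) => [ljk|lkj|ejk].
  - exact: pairlt.
  - by have [i hi] := pairlt _ _ lkj; exists i; apply: li_sym.
  - by move: njk; rewrite (val_inj ejk) eqxx.
have hzero i (j k : 'I_(n ^ 3).+1) : g i j = 0 -> g i k = 0 -> j = k.
  move=> hj hk; apply/eqP; apply/negP => njk.
  have zlt (a b : 'I_(n ^ 3).+1) : (a < b)%N -> g i a = 0 -> g i b = 0 -> False.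
    move=> lab ha hb; have := FW_nz (rFs i) (rW _ _ lab); move/eqP; apply.
    have e : Fs i *m row_mx (M ^+ a *m s) (M ^+ b *m s) = 0.
      by rewrite mul_mx_row -/(g i a) -/(g i b) ha hb row_mx0.
    exact e.
  case: (ltngtP j k) => [ljk|lkj|ejk].
  - exact: zlt ljk hj hk.
  - exact: zlt lkj hk hj.
  - by move: njk; rewrite (val_inj ejk) eqxx.
have [i [Rs [cR pw]]] := comb n1 hpair hzero.
exists (Fs i); split; first exact: FsE.
exists (map (g i) (enum Rs)); split.
- rewrite map_inj_in_uniq ?enum_uniq // => x y; rewrite !mem_enum => xR yR e.
  apply/eqP; apply/negPn/negP => nxy.
  by move: (li_neq (pw x y xR yR nxy)); rewrite e eqxx.
- by rewrite size_map -cardE.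
- move=> v /mapP [k _ ->]; exists (k : nat) => //; by rewrite -ltnS ltn_ord.
- move=> u v /mapP [j jR ->] /mapP [k kR ->] nuv.
  rewrite mem_enum in jR; rewrite mem_enum in kR.
  apply: pw => //; apply/negP => /eqP ejk; by rewrite ejk eqxx in nuv.
Qed.
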